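(* For every integer $n \geq 1$, $D_n = n\left[D_{n-1} + (-1)^{n-1}\right]$, with the convention $D_0 = 0$.
   Context: A linear arrangement of $\{1,\ldots,n\}$ is a sequence $a_1\cdots a_n$ in which each of $1,\ldots,n$ appears exactly once. It contains the pattern $ij$ if $a_t=i$ and $a_{t+1}=j$ for some $t$; otherwise it avoids it. $D_n$ is the number of linear arrangements of $\{1,\ldots,n\}$ avoiding all of the patterns $12, 23, \ldots, (n-1)n, n1$; $D_0=0$. *)

(* Defs.v *)
From mathcomp Require Import all_boot all_order all_algebra all_fingroup.
Set Implicit Arguments. Unset Strict Implicit. Unset Printing Implicit Defensive.

(* A linear arrangement a_1 ... a_n of {1..n} is encoded as a permutation
   s : 'S_n with a_{t+1} = (s t) + 1 for t : 'I_n (0-based positions/values).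
   The forbidden patterns 12, 23, ..., (n-1)n, n1 are exactly the pairs
   (i, j) with j = i+1 cyclically; in 0-based values: j = (i + 1) %% n. *)
Definition avoids_cyc (n : nat) (s : 'S_n) : bool :=
  [forall t : 'I_n, forall u : 'I_n,
     (val u == (val t).+1) ==> (val (s u) != ((val (s t)).+1 %% n))].

Definition D (n : nat) : nat :=
  if n is 0 then 0 else #|[set s : 'S_n | avoids_cyc s]|.

(* Main.v *)
Require Import Defs.
From mathcomp Require Import all_boot all_order all_algebra all_fingroup.
From mathcomp Require Import zify ring.
Set Implicit Arguments. Unset Strict Implicit. Unset Printing Implicit Defensive.

Lemma count_bij (T U : eqType) (s : seq T) (t : seq U) (P : pred T) (Q : pred U)
  (F : T -> U) (G : U -> T) :
  uniq s -> uniq t ->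
  {in s, forall x, P x -> [&& F x \in t, Q (F x) & G (F x) == x]} ->
  {in t, forall y, Q y -> [&& G y \in s, P (G y) & F (G y) == y]} ->
  count P s = count Q t.
Proof.
move=> us ut HF HG.
rewrite -!size_filter.
have ->: size (filter P s) = size (map F (filter P s)) by rewrite size_map.
apply: perm_size; apply: uniq_perm.
- rewrite map_inj_in_uniq ?filter_uniq //.
  move=> a b; rewrite !mem_filter => /andP[Pa sa] /andP[Pb sb] eab.
  have /and3P[_ _ /eqP <-] := HF a sa Pa.
  have /and3P[_ _ /eqP <-] := HF b sb Pb.
  by rewrite eab.
- exact: filter_uniq.
move=> y; apply/mapP/idP.
- case=> x; rewrite mem_filter => /andP[Px sx] ->.
  have /and3P[? ? _] := HF x sx Px; by rewrite mem_filter; apply/andP.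
- rewrite mem_filter => /andP[Qy ty].
  have /and3P[? ? /eqP <-] := HG y ty Qy.
  by exists (G y) => //; rewrite mem_filter; apply/andP.
Qed.

Definition nr (r : rel nat) : rel nat := fun a b => ~~ r a b.
Definition A (X : seq nat) (r : rel nat) : nat :=
  count (sorted (nr r)) (permutations X).

Fixpoint adjb (x y : nat) (l : seq nat) : bool :=
  match l with
  | a :: ((b :: _) as t) => ((a == x) && (b == y)) || adjb x y t
  | _ => false
  end.

Fixpoint ins (x y : nat) (l : seq nat) : seq nat :=
  if l is a :: t then (if a == x then a :: y :: t else a :: ins x y t) else [::].

Lemma eq_A X r r' : (forall a b, a \in X -> b \in X -> r a b = r' a b) ->
  A X r = A X r'.
Proof.
move=> H; apply: eq_in_count => l; rewrite mem_permutations => pl.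
case: l pl => //= a l pl.
apply: (@eq_in_path _ (mem X)).
  by move=> u v uX vX; rewrite /nr H.
by apply/allP => z; rewrite (perm_mem pl).
Qed.

Lemma count_split (T : eqType) (P Q : pred T) s :
  count P s = count (fun z => P z && Q z) s + count (fun z => P z && ~~ Q z) s.
Proof.
elim: s => //= a s ->; case: (P a); case: (Q a) => /=; lia.
Qed.

Lemma adjb_cons x y a b l :
  adjb x y (a :: b :: l) = ((a == x) && (b == y)) || adjb x y (b :: l).
Proof. by []. Qed.

Lemma path_add r x y a l :
  path (nr (fun u v => r u v || ((u == x) && (v == y)))) a l =
  path (nr r) a l && ~~ adjb x y (a :: l).
Proof.
elim: l a => [|b l IH] a; first by [].
rewrite adjb_cons [LHS]/= [path (nr r) a _]/= IH /nr negb_or.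
by case: (r a b); case: ((a == x) && (b == y)); case: (path _ b l);
  case: (adjb x y (b :: l)).
Qed.

Lemma sorted_add r x y l :
  sorted (nr (fun u v => r u v || ((u == x) && (v == y)))) l =
  sorted (nr r) l && ~~ adjb x y l.
Proof. by case: l => // a l; rewrite /= path_add. Qed.

Lemma adjbP x y l : adjb x y l -> exists p q, l = p ++ x :: y :: q.
Proof.
elim: l => [|a l IH] //=; case: l IH => [|b l] IH //.
case/orP => [/andP[/eqP -> /eqP ->]|/IH [p [q ->]]].
  by exists [::], l.
by exists (a :: p), q.
Qed.

Lemma adjb_cat x y p q : adjb x y (p ++ x :: y :: q).
Proof.
elim: p => [|a p IH] /=; first by rewrite !eqxx.
case: p IH => [|b p] IH; first by rewrite /= !eqxx orbT.
by apply/orP; right.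
Qed.

Lemma ins_cat x y p q : x \notin p -> ins x y (p ++ x :: q) = p ++ x :: y :: q.
Proof.
elim: p => [|a p IH] /=; first by rewrite eqxx.
by rewrite inE negb_or eq_sym => /andP[/negbTE -> /IH ->].
Qed.

Lemma rem_cat2 (y : nat) (p s : seq nat) : y \notin p -> rem y (p ++ s) = p ++ rem y s.
Proof.
elim: p => [|a p IH] //=.
by rewrite inE negb_or eq_sym => /andP[/negbTE -> /IH ->].
Qed.

Lemma path_eq_first (e e' : rel nat) (P : pred nat) a l :
  (forall u v, P u -> e u v = e' u v) -> all P (belast a l) ->
  path e a l = path e' a l.
Proof.
move=> H; elim: l a => [|b l IH] a //= /andP[Pa Pl].
by rewrite H // IH.
Qed.

Definition contr (r : rel nat) (x y : nat) : rel nat :=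
  fun a b => if a == x then r y b else r a b.

Lemma contract_sorted r x y p q :
  x \notin p -> x \notin q -> ~~ r x y ->
  sorted (nr r) (p ++ x :: y :: q) = sorted (nr (contr r x y)) (p ++ x :: q).
Proof.
move=> xp xq rxy.
rewrite !sorted_cat_cons /= /nr rxy /=.
have E1 : sorted (nr r) (rcons p x) = sorted (nr (contr r x y)) (rcons p x).
  case: p xp => [|a p] //= xp.
  apply: (@path_eq_first _ _ (fun u => u != x)).
    by move=> u v /negbTE ux; rewrite /nr /contr ux.
  by rewrite belast_rcons; apply/allP => z zp; apply/negP => /eqP zx;
     move: xp; rewrite -zx zp.
rewrite E1; congr (_ && _).
case: q xq => [|b q] //= xq.
rewrite /contr eqxx; congr (_ && _).
apply: (@path_eq_first _ _ (fun u => u != x)).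
  by move=> u v /negbTE ux; rewrite /nr /contr ux.
apply/allP => z /mem_belast zq; apply/negP => /eqP zx.
by move: xq; rewrite -zx zq.
Qed.

Lemma uniq_split (p : seq nat) x s :
  uniq (p ++ x :: s) -> x \notin p /\ x \notin s.
Proof.
rewrite cat_uniq => /and3P[_ H /andP[xs _]]; split=> //.
by apply: contra H => xp; rewrite /= xp.
Qed.

Lemma perm_rem_uniq (y : nat) s t : uniq s -> perm_eq s t -> perm_eq (rem y s) (rem y t).
Proof.
move=> us pst; have ut : uniq t by rewrite -(perm_uniq pst).
by rewrite !rem_filter //; apply: perm_filter.
Qed.

Lemma A_split X r x y : uniq X -> x \in X -> y \in X -> x != y -> ~~ r x y ->
  A X r = A X (fun u v => r u v || ((u == x) && (v == y))) + A (rem y X) (contr r x y).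
Proof.
move=> uX xX yX nxy rxy.
rewrite /A (count_split _ (adjb x y)) addnC; congr (_ + _).
  by apply: eq_count => l; rewrite sorted_add.
apply: (count_bij (F := rem y) (G := ins x y)).
- exact: permutations_uniq.
- exact: permutations_uniq.
- move=> l; rewrite mem_permutations => pl /andP[sl /adjbP [p [q El]]].
  have ul : uniq l by rewrite (perm_uniq pl).
  move: (ul); rewrite El => ul'.
  have [xp xq'] := uniq_split ul'.
  have [yp yq] : y \notin p /\ y \notin q.
    move: ul'; rewrite -cat_rcons => /uniq_split [].
    by rewrite mem_rcons inE negb_or => /andP[].
  have xq : x \notin q by move: xq'; rewrite inE negb_or => /andP[].
  have Fl : rem y l = p ++ x :: q.
    by rewrite El rem_cat2 //= (negbTE nxy) /= eqxx.
  rewrite -El Fl ins_cat // -El eqxx andbT mem_permutations.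
  by rewrite -contract_sorted // -El sl andbT -Fl perm_rem_uniq.
- move=> l; rewrite mem_permutations => pl sl.
  have ul : uniq l by rewrite (perm_uniq pl) rem_uniq.
  have xl : x \in l by rewrite (perm_mem pl) mem_rem_uniq // inE nxy.
  have yl : y \notin l by rewrite (perm_mem pl) mem_rem_uniqF.
  move: ul pl sl yl; case/splitPr: xl => p q ul pl sl yl.
  have [xp xq] := uniq_split ul.
  have [yp yq] : y \notin p /\ y \notin q.
    by move: yl; rewrite mem_cat inE !negb_or => /and3P[].
  rewrite ins_cat // rem_cat2 //= (negbTE nxy) /= eqxx eqxx !andbT.
  rewrite adjb_cat andbT contract_sorted // sl andbT mem_permutations.
  apply: (@perm_trans _ (y :: (p ++ x :: q))).
    by apply/seq.permP => f; rewrite /= !count_cat /= !addnA; congr (_ + _); rewrite addnC addnA.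
  by rewrite perm_sym (perm_trans (perm_to_rem yX)) // perm_cons perm_sym.
Qed.


Import GRing.Theory.


Fixpoint g (n k : nat) : int :=
  match k with
  | 0 => Posz (n`!)
  | k'.+1 => (g n k' - g n.-1 k')%R
  end.

Lemma path_true (a : nat) l : path (fun _ _ => true) a l.
Proof. by elim: l a => //= b l IH a; apply: IH. Qed.

Lemma A_acyc k : forall X E (f : nat -> nat), uniq X -> uniq E -> size E = k ->
  {subset E <= X} -> {in E, forall a, f a \in X} -> {in E &, injective f} ->
  {in E, forall a, a < f a} ->
  Posz (A X (fun a b => (a \in E) && (b == f a))) = g (size X) k.
Proof.
elim: k => [|k IH] X E f uX uE sE sEX fX finj fgt.
  case: E uE sE sEX fX finj fgt => // _ _ _ _ _ _ /=.
  rewrite /A -size_permutations //; congr (Posz _).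
  rewrite -count_predT; apply: eq_count => l.
  case: l => //= a l; exact: path_true.
case: E uE sE sEX fX finj fgt => // x E0 /= /andP[xE0 uE0] [sE0] sEX fX finj fgt.
set y := f x.
have xX : x \in X by apply: sEX; rewrite inE eqxx.
have Ex : x \in x :: E0 by rewrite inE eqxx.
have yX : y \in X by apply: fX.
have xy : x < y by apply: fgt.
have nxy : x != y by rewrite neq_ltn xy.
set r0 := fun a b => (a \in E0) && (b == f a).
have rxy : ~~ r0 x y by rewrite /r0 (negbTE xE0).
have := A_split uX xX yX nxy rxy.
rewrite (@eq_A X (fun u v => r0 u v || ((u == x) && (v == y)))
                (fun a b => (a \in x :: E0) && (b == f a))); last first.
  move=> a b _ _; rewrite /r0 inE.
  case: (eqVneq a x) => [->|nax]; first by rewrite (negbTE xE0) /=.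
  by rewrite /= orbF.
move=> Hsplit.
have -> : Posz (A X (fun a b => (a \in x :: E0) && (b == f a))) =
          (Posz (A X r0) - Posz (A (rem y X) (contr r0 x y)))%R.
  by rewrite Hsplit PoszD addrK.
rewrite IH //; last 4 first.
- by move=> a aE; apply: sEX; rewrite inE aE orbT.
- by move=> a aE; apply: fX; rewrite inE aE orbT.
- by move=> a b aE bE; apply: finj; rewrite inE ?aE ?bE orbT.
- by move=> a aE; apply: fgt; rewrite inE aE orbT.
congr (_ - _)%R.
have xrem : x \notin rem y E0 by apply: contra xE0; apply: mem_rem.
have remE0 : forall a, a \in rem y E0 -> (a != y) && (a \in E0).
  by move=> a; rewrite mem_rem_uniq.
have inremX : forall a, a != y -> a \in X -> a \in rem y X.
  by move=> a ay aX; rewrite mem_rem_uniq // inE ay.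
have fE : forall a, a \in E0 -> a \in x :: E0 by move=> a aE; rewrite inE aE orbT.
set E' := if y \in E0 then x :: rem y E0 else rem y E0.
set f' := fun a => if a == x then f y else f a.
have memE'P : forall a, a \in E' ->
    ((a == x) && (y \in E0)) || [&& a != x, a != y & a \in E0].
  move=> a; rewrite /E'; case: ifP => yE0.
    rewrite inE => /orP[->//|/remE0 /andP[ay aE]].
    by rewrite ay aE; case: eqP => // ax; move: xE0; rewrite -ax aE.
  move=> /remE0 /andP[ay aE]; rewrite ay aE.
  by case: eqP => // ax; move: xE0; rewrite -ax aE.
rewrite (@eq_A _ _ (fun a b => (a \in E') && (b == f' a))); last first.
  move=> a b aX _.
  have ay : a != y by move: aX; rewrite mem_rem_uniq // inE => /andP[].
  rewrite /contr /r0 /f' /E'.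
  case: (eqVneq a x) => [->|nax].
    by case: ifP => yE0; rewrite ?inE ?eqxx ?(negbTE xrem) ?andbF.
  case: ifP => _; rewrite ?inE ?(negbTE nax) /= mem_rem_uniq // inE ay //.
rewrite IH ?size_rem ?rem_uniq //.
- rewrite /E'; case: ifP => yE0 /=; first by rewrite xrem rem_uniq.
  exact: rem_uniq.
- rewrite /E'; case: ifP => yE0 /=.
    by rewrite size_rem // sE0 prednK // -sE0; case: (E0) yE0.
  by rewrite rem_id ?yE0.
- move=> a /memE'P /orP[/andP[/eqP -> _]|/and3P[_ ay aE]].
    by apply: inremX.
  by apply: inremX => //; apply: sEX; apply: fE.
- move=> a /memE'P /orP[/andP[/eqP -> yE0]|/and3P[ax ay aE]].
    rewrite /f' eqxx; apply: inremX; last by apply: fX; apply: fE.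
    by rewrite neq_ltn fgt ?orbT // fE.
  rewrite /f' (negbTE ax); apply: inremX; last by apply: fX; apply: fE.
  apply/eqP => fay; move/negP: ax; apply; apply/eqP.
  by apply: finj; [exact: fE | exact: Ex | exact: fay].
- move=> a b /memE'P Ha /memE'P Hb; rewrite /f'.
  case/orP: Ha => [/andP[/eqP -> yE0]|/and3P[ax ay aE]];
  case/orP: Hb => [/andP[/eqP -> yE0']|/and3P[bx by_ bE]]; rewrite ?eqxx //.
  + rewrite (negbTE bx) => fyb; case/negP: by_; apply/eqP.
    by apply: finj; [exact: fE | exact: fE | exact: esym fyb].
  + rewrite (negbTE ax) => fay; case/negP: ay; apply/eqP.
    by apply: finj; [exact: fE | exact: fE | exact: fay].
  + by rewrite (negbTE ax) (negbTE bx); apply: finj; apply: fE.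
- move=> a /memE'P /orP[/andP[/eqP -> yE0]|/and3P[ax ay aE]].
    rewrite /f' eqxx; apply: (ltn_trans xy); apply: fgt; exact: fE.
  by rewrite /f' (negbTE ax); apply: fgt; apply: fE.
Qed.


Definition rC (n : nat) : rel nat := fun a b => b == (a.+1 %% n).

Lemma count_map_perm (T U : eqType) (s : seq T) (t : seq U) (P : pred T) (Q : pred U)
  (F : T -> U) :
  uniq s -> {in s &, injective F} -> uniq t -> (forall y, (y \in t) = (y \in map F s)) ->
  {in s, forall x, P x = Q (F x)} -> count P s = count Q t.
Proof.
move=> us Finj ut tE PQ.
rewrite (eq_in_count PQ) -(count_map F Q).
have /seq.permP -> // : perm_eq (map F s) t.
apply: uniq_perm => //; first by rewrite map_inj_in_uniq.
Qed.

Definition Fs n (s : 'S_n) : seq nat := [seq val (s i) | i <- enum 'I_n].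

Lemma Fs_perm n (s : 'S_n) : perm_eq (Fs s) (iota 0 n).
Proof.
have -> : Fs s = map val (map s (enum 'I_n)) by rewrite -map_comp.
rewrite -val_enum_ord.
apply: perm_map; apply: uniq_perm; rewrite ?enum_uniq //.
  by rewrite map_inj_uniq ?enum_uniq //; apply: perm_inj.
move=> i; rewrite mem_enum inE; apply/mapP; exists (s^-1 i)%g; rewrite ?mem_enum //.
by rewrite permKV.
Qed.

Lemma nth_Fs n (s : 'S_n.+1) i : i < n.+1 -> nth 0 (Fs s) i = val (s (inord i)).
Proof.
move=> hi; rewrite /Fs (nth_map ord0) ?size_enum_ord //; congr (val (s _)).
by apply: val_inj; rewrite /= inordK // nth_enum_ord.
Qed.

Lemma size_Fs n (s : 'S_n) : size (Fs s) = n.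
Proof. by rewrite size_map size_enum_ord. Qed.

Lemma avoids_sorted n (s : 'S_n.+1) : avoids_cyc s = sorted (nr (rC n.+1)) (Fs s).
Proof.
apply/idP/idP.
  move=> /forallP H; apply/(sortedP 0) => i; rewrite size_Fs => hi.
  rewrite (nth_Fs _ hi) (nth_Fs _ (ltnW hi)).
  have := H (inord i); move=> /forallP /(_ (inord i.+1)) /implyP; apply.
  by rewrite /= !inordK // ltnW.
move=> /(sortedP 0) H; apply/forallP => t; apply/forallP => u; apply/implyP => /eqP ut.
have := H t; rewrite size_Fs -ut => /(_ (ltn_ord u)).
by rewrite (nth_Fs _ (ltn_ord t)) (nth_Fs _ (ltn_ord u)) !inord_val.
Qed.

Lemma D_A n : #|[set s : 'S_n.+1 | avoids_cyc s]| = A (iota 0 n.+1) (rC n.+1).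
Proof.
rewrite cardsE cardE /A /enum_mem size_filter -enumT.
apply: (count_map_perm (F := @Fs n.+1)).
- exact: enum_uniq.
- move=> s1 s2 _ _ E; apply/permP => i; apply: val_inj.
  have H : nth 0 (Fs s1) i = nth 0 (Fs s2) i by rewrite E.
  by move: H; rewrite !nth_Fs // inord_val.
- exact: permutations_uniq.
- move=> l; rewrite mem_permutations; apply/idP/mapP.
    move=> pl.
    have ul : uniq l by rewrite (perm_uniq pl) iota_uniq.
    have sl : size l = n.+1 by rewrite (perm_size pl) size_iota.
    have lt : forall i, i < n.+1 -> nth 0 l i < n.+1.
      move=> i hi; have : nth 0 l i \in l by rewrite mem_nth ?sl.
      by rewrite (perm_mem pl) mem_iota.
    have finj : injective (fun i : 'I_n.+1 => (inord (nth 0 l i) : 'I_n.+1)).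
      move=> i j /(congr1 val) /=; rewrite !inordK ?lt //.
      by move/eqP; rewrite nth_uniq ?sl // => /eqP; apply: val_inj.
    exists (perm finj); first by rewrite mem_enum.
    apply: (@eq_from_nth _ 0); rewrite ?size_Fs ?sl // => i hi.
    by rewrite nth_Fs // permE /= !inordK ?lt.
  by case=> s _ ->; exact: Fs_perm.
- by move=> s _; exact: (avoids_sorted s).
Qed.


Lemma A_relabel Y r : uniq Y -> A (map succn Y) r = A Y (fun a b => r a.+1 b.+1).
Proof.
move=> uY; rewrite /A.
apply: (count_bij (F := map predn) (G := map succn)); try exact: permutations_uniq.
- move=> l; rewrite mem_permutations => pl sl.
  have El : map succn (map predn l) = l.
    rewrite -map_comp; apply: map_id_in => z; rewrite (perm_mem pl).
    by case/mapP => w _ ->.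
  rewrite El eqxx andbT mem_permutations.
  have -> : Y = map predn (map succn Y) by rewrite -map_comp map_id.
  rewrite perm_map //=; move: sl; rewrite -El sorted_map.
  by rewrite -map_comp map_id.
- move=> l; rewrite mem_permutations => pl sl.
  rewrite -map_comp map_id eqxx andbT mem_permutations perm_map //=.
  by rewrite sorted_map.
Qed.

Definition rP (m : nat) : rel nat := fun a b => (a \in iota 0 m) && (b == a.+1).

Lemma cyc_step m : 0 < m ->
  A (iota 0 m.+1) (rC m.+1) + A (iota 0 m) (rC m) = A (iota 0 m.+1) (rP m).
Proof.
move=> m0.
have h1 : m \in iota 0 m.+1 by rewrite mem_iota add0n ltnSn.
have h2 : 0 \in iota 0 m.+1 by rewrite mem_iota.
have h3 : m != 0 by rewrite -lt0n.
have h4 : ~~ rP m m 0 by rewrite /rP mem_iota ltnn.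
rewrite (A_split (iota_uniq 0 m.+1) h1 h2 h3 h4).
congr (_ + _).
  apply: eq_A => a b; rewrite !mem_iota /= => ha hb; rewrite /rC /rP mem_iota /=.
  have [am|am] := ltnP a m.
    by rewrite modn_small // (ltn_eqF am) orbF.
  have -> : a = m by apply/eqP; rewrite eqn_leq am -ltnS ha.
  by rewrite modnn eqxx.
have -> : rem 0 (iota 0 m.+1) = iota 1 m by [].
have -> : iota 1 m = map succn (iota 0 m).
  by rewrite (iotaDl 1 0 m); apply: eq_map => x; rewrite add1n.
rewrite A_relabel ?iota_uniq //.
apply: eq_A => a b; rewrite !mem_iota /= => ha hb; rewrite /rC /contr /rP !mem_iota /=.
case: (eqVneq a.+1 m) => [am|am].
  by rewrite am modnn m0 eqSS.
have am' : a.+1 < m by rewrite ltn_neqAle am ha.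
by rewrite am' modn_small // eqSS.
Qed.

Lemma path_count m : Posz (A (iota 0 m.+1) (rP m)) = g m.+1 m.
Proof.
rewrite /rP; have := @A_acyc m (iota 0 m.+1) (iota 0 m) succn; rewrite !size_iota; apply;
  rewrite ?iota_uniq ?size_iota //.
- by move=> a; rewrite !mem_iota /= => /ltnW.
- by move=> a; rewrite !mem_iota.
- by move=> a b _ _ [].
Qed.

Local Open Scope ring_scope.

Definition tt (k N j : nat) : int := (-1) ^+ j * Posz ('C(k, j) * (N - j)`!).

Lemma tt_step k N i : tt k.+1 N i.+1 = tt k N i.+1 - tt k N.-1 i.
Proof.
rewrite /tt binS.
have -> : (N - i.+1)%N = (N.-1 - i)%N by lia.
rewrite exprS !PoszM PoszD; ring.
Qed.

Lemma g_closed k : forall N M, (k < M)%N -> g N k = \sum_(j < M) tt k N j.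
Proof.
elim: k => [|k IH] N [|M] //= hM.
  rewrite big_ord_recl big1 ?addr0; first by rewrite /tt expr0 mul1r bin0 mul1n subn0.
  by move=> i _; rewrite /tt bin0n mul0n mulr0.
rewrite (IH N M.+1) ?(ltnW hM) // (IH N.-1 M) // big_ord_recl.
rewrite [in RHS]big_ord_recl.
under [in RHS]eq_bigr do rewrite tt_step.
rewrite sumrB /tt !bin0 !expr0 addrA; congr (_ + _ - _).
Qed.

Lemma fact_id n j : (j <= n)%N ->
  ('C(n.+1, j) * (n.+1 - j)`! = n.+1 * ('C(n, j) * (n - j)`!))%N.
Proof.
move=> hj; apply/eqP; rewrite -(eqn_pmul2r (fact_gt0 j)).
have h1 := bin_fact (leqW hj); have h2 := bin_fact hj.
rewrite -!mulnA [((n.+1 - j)`! * _)%N]mulnC h1 [((n - j)`! * _)%N]mulnC h2 factS.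
by [].
Qed.

Lemma g_diag n : g n.+1 n.+1 = Posz n.+1 * g n n + (-1) ^+ n.+1.
Proof.
rewrite (@g_closed n.+1 n.+1 n.+2) // (@g_closed n n n.+1) // big_ord_recr /=.
rewrite /tt binn subnn mul1n /= mulr1 mulr_sumr; congr (_ + _).
apply: eq_bigr => i _; rewrite fact_id ?PoszM; last by rewrite -ltnS.
ring.
Qed.

Definition Dl n := A (iota 0 n) (rC n).

Lemma Dl_closed n : Posz (Dl n.+1) = g n.+1 n.+1 - (-1) ^+ n.+1.
Proof.
elim: n => [|n IH].
  have -> : Dl 1 = 1%N by [].
  by rewrite /= !expr1.
have := cyc_step (m := n.+1) erefl.
move/(congr1 Posz); rewrite PoszD path_count -/(Dl n.+2) -/(Dl n.+1) IH.
have -> : g n.+2 n.+1 = g n.+2 n.+2 + g n.+1 n.+1.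
  by rewrite [g n.+2 n.+2]/= subrK.
move=> H.
have -> : Posz (Dl n.+2) = g n.+2 n.+2 + g n.+1 n.+1 - (g n.+1 n.+1 - (-1) ^+ n.+1).
  by rewrite -H addrK.
by rewrite [in RHS]exprS mulN1r opprK opprB (addrC (_ ^+ _)) addrA addrK.
Qed.


Unset Implicit Arguments.

Theorem corollary3p2 (n : nat) : (1 <= n)%N ->
  (D n)%:Z = n%:Z * ((D n.-1)%:Z + (-1) ^+ n.-1).
Proof.
case: n => [|[|m]] // _.
  rewrite /D D_A -/(Dl 1).
  by have -> : Dl 1 = 1%N by [].
rewrite /D !D_A -/(Dl m.+2) -/(Dl m.+1) !Dl_closed g_diag /=.
by rewrite addrK subrK.
Qed.
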